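(* Let $\mathbb F\subseteq\mathbb D$ be finite and let $(h,i)\in\mathbb F$ be $\mathbb F$-admissible. Then $|\Phi_h^{(i)}(\mathbb F)|=|\mathbb F|+1$ and $\mathrm{lh}(\Phi_h^{(i)}(\mathbb F))=\mathrm{lh}(\mathbb F)$.
   Context: Dyadic intervals: $\Delta_k^{(j)}:=[\frac{j-1}{2^k},\frac{j}{2^k})$ for $k\ge0$. Dyadic tree $\mathbb D:=\{(k,j):k\ge1;\ j=1,\dots,2^{k-1}\}$. Branches: $\mathbb B(t):=\{(k,j)\in\mathbb D:t\in\Delta_{k-1}^{(j)}\}$ for $t\in[0,1)$; local height $\mathrm{lh}(\mathbb F):=\max_{t\in[0,1)}|\mathbb F\cap\mathbb B(t)|$. An index $(h,i)\in\mathbb F$ is $\mathbb F$-admissible if neither $(h+1,2i-1)$ nor $(h+1,2i)$ belongs to $\mathbb F$. The fork is $\mathbb F_h^{(i)}:=\{(h,i),(h+1,2i-1),(h+1,2i)\}$. For $(k,j)\in\mathbb D$ define $j^\ast$ by: $j^\ast=j+2^{k-h-2}$ if $\Delta_{k-1}^{(j)}\subseteq\Delta_{h+1}^{(4i-2)}$; $j^\ast=j-2^{k-h-2}$ if $\Delta_{k-1}^{(j)}\subseteq\Delta_{h+1}^{(4i-1)}$; $j^\ast=j$ otherwise (equivalently $\chi_k^{(j)}\circ\phi_h^{(i)}=\chi_k^{(j^\ast)}$ for $(k,j)\notin\mathbb F_h^{(i)}$, where $\phi_h^{(i)}$ is the map of $[0,1)$ interchanging $\Delta_{h+1}^{(4i-2)}$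 and $\Delta_{h+1}^{(4i-1)}$ by translation and $\chi_k^{(j)}$ are the $L_2$-normalized Haar functions, $\chi_k^{(j)}=\pm2^{(k-1)/2}$ on $\Delta_k^{(2j-1)}$ resp. $\Delta_k^{(2j)}$). Then $\Phi_h^{(i)}(\mathbb F):=\{(h+1,2i-1),(h+1,2i)\}\cup\{(k,j^\ast):(k,j)\in\mathbb F\setminus\mathbb F_h^{(i)}\}$. *)

(* Defs.v *)
From HB Require Import structures.
From mathcomp Require Import all_boot all_order all_algebra.
From mathcomp Require Import finmap.
From mathcomp Require Import boolp classical_sets reals.

Set Implicit Arguments. Unset Strict Implicit. Unset Printing Implicit Defensive.
Import Order.TTheory GRing.Theory Num.Theory.

Local Open Scope ring_scope.

Definition dyadic (R : realType) (k j : nat) : set R :=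
  [set t : R | ((j - 1)%N%:R / 2 ^+ k <= t) && (t < j%:R / 2 ^+ k)].

Definition inD (p : nat * nat) : bool :=
  (1 <= p.1)%N && (1 <= p.2 <= 2 ^ (p.1 - 1))%N.

Definition branch (R : realType) (t : R) : set (nat * nat) :=
  [set p | inD p /\ @dyadic R (p.1 - 1) p.2 t].

Local Open Scope fset_scope.

Definition branch_count (R : realType) (F : {fset nat * nat}) (t : R) : nat :=
  #|` [fset p in F | `[< @branch R t p >]] |.

(* lh(F) = max_{t in [0,1)} |F \cap B(t)|  (all values are <= |F|). *)
Definition lh (R : realType) (F : {fset nat * nat}) : nat :=
  \max_(m < (#|` F |).+1 |
          `[< exists t : R, (0 <= t < 1)%R /\ @branch_count R F t = m >]) (m : nat).

Definition admissible (F : {fset nat * nat}) (h i : nat) : bool :=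
  [&& (h, i) \in F, (h.+1, (2 * i - 1)%N) \notin F & (h.+1, (2 * i)%N) \notin F].

Definition fork (h i : nat) : {fset nat * nat} :=
  [fset (h, i); (h.+1, (2 * i - 1)%N); (h.+1, (2 * i)%N)].

Definition jstar (R : realType) (h i : nat) (p : nat * nat) : nat * nat :=
  let k := p.1 in let j := p.2 in
  (k, if `[< (@dyadic R (k - 1) j `<=` @dyadic R (h + 1) (4 * i - 2))%classic >]
      then (j + 2 ^ (k - h - 2))%N
      else if `[< (@dyadic R (k - 1) j `<=` @dyadic R (h + 1) (4 * i - 1))%classic >]
      then (j - 2 ^ (k - h - 2))%N
      else j).

Definition Phi (R : realType) (h i : nat) (F : {fset nat * nat}) : {fset nat * nat} :=
  [fset (h.+1, (2 * i - 1)%N); (h.+1, (2 * i)%N)]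
  `|` [fset jstar R h i p | p in F `\` fork h i].

(* Main.v *)
Require Import Defs.
From HB Require Import structures.
From mathcomp Require Import all_boot all_order all_algebra.
From mathcomp Require Import finmap.
From mathcomp Require Import boolp classical_sets reals.
From mathcomp Require Import zify ring lra.
Set Implicit Arguments. Unset Strict Implicit. Unset Printing Implicit Defensive.
Import Order.TTheory GRing.Theory Num.Theory.
Local Open Scope ring_scope.

Definition fl (R : realType) (n : nat) (t : R) : nat := Num.truncn (t * 2 ^+ n).

Lemma expr2_gt0 (R : realType) n : (0:R) < 2 ^+ n.
Proof. by apply: exprn_gt0. Qed.

Lemma fl_def (R : realType) n (t : R) (m : nat) :
  m%:R <= t * 2 ^+ n < m.+1%:R -> fl n t = m.
Proof. by move=> H; apply: truncn_def. Qed.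

Lemma fl_itv (R : realType) n (t : R) : 0 <= t ->
  (fl n t)%:R <= t * 2 ^+ n < (fl n t).+1%:R.
Proof. move=> t0; apply: truncn_itv; apply: mulr_ge0 => //; exact: ltW (expr2_gt0 _ _). Qed.

Lemma fl_div (R : realType) n m (t : R) : 0 <= t ->
  fl n t = (fl (n + m) t %/ 2 ^ m)%N.
Proof.
move=> t0; have := fl_itv (n + m) t0; set z := fl (n+m) t => /andP[H1 H2].
apply: fl_def.
have e : t * 2 ^+ (n + m) = (t * 2 ^+ n) * (2 ^+ m) by rewrite exprD mulrA.
have qp : (0:R) < 2 ^+ m := expr2_gt0 _ _.
rewrite e in H1 H2.
have Hz := divn_eq z (2 ^ m).
have Hr : (z %% 2 ^ m < 2 ^ m)%N by rewrite ltn_mod expn_gt0.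
apply/andP; split.
- rewrite -(ler_pM2r qp); apply: le_trans H1.
  rewrite -natrX -natrM ler_nat {2}Hz; lia.
- rewrite -(ltr_pM2r qp); apply: lt_le_trans H2 _.
  rewrite -natrX -natrM ler_nat {1}Hz; nia.
Qed.

Lemma fl_nat (R : realType) n (w : nat) : fl n ((w%:R : R) / 2 ^+ n) = w.
Proof.
rewrite /fl mulrVK ?natrK //; rewrite unitfE; exact: lt0r_neq0 (expr2_gt0 _ _).
Qed.


Lemma memD (R : realType) n j (t : R) : 0 <= t ->
  dyadic n j t <-> ((0 < j)%N && (fl n t == j.-1)).
Proof.
move=> t0; have qp : (0:R) < 2 ^+ n := expr2_gt0 _ _.
rewrite /dyadic /= ler_pdivrMr // ltr_pdivlMr //.
have := fl_itv n t0; move=> /andP[H1 H2].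
case: j => [|j] /=.
  split => // /andP[_ H]; have : (0:R) <= t * 2 ^+ n by apply: mulr_ge0 => //; exact: ltW.
  by rewrite leNgt H.
rewrite subn1 /=; split.
  by move=> H; apply/eqP; apply: fl_def.
move=> /eqP <-; exact/andP.
Qed.

Lemma dyadic_ge0 (R : realType) n j (t : R) : dyadic n j t -> 0 <= t.
Proof.
rewrite /dyadic /= => /andP[H _]; apply: le_trans H.
apply: divr_ge0 => //; exact: ltW (expr2_gt0 _ _).
Qed.

Lemma fl_addn (R : realType) n (t : R) (w : nat) : 0 <= t ->
  fl n (t + w%:R / 2 ^+ n) = (fl n t + w)%N.
Proof.
move=> t0; have qp : (0:R) < 2 ^+ n := expr2_gt0 _ _.
have := fl_itv n t0; move=> /andP[H1 H2].
apply: fl_def; rewrite mulrDl divfK ?lt0r_neq0 // natrD.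
apply/andP; split; first by rewrite lerD2r.
by rewrite -addSn natrD ltrD2r.
Qed.

Lemma fl_shift_up (R : realType) N K (t : R) : 0 <= t -> (N <= K)%N ->
  fl K (t + 1 / 2 ^+ N) = (fl K t + 2 ^ (K - N))%N.
Proof.
move=> t0 NK; rewrite -fl_addn //; congr fl; congr (_ + _).
rewrite natrX; move: (K - N)%N (subnKC NK) => d <-.
rewrite exprD; have h1 := lt0r_neq0 (expr2_gt0 R N); have h2 := lt0r_neq0 (expr2_gt0 R d).
by field; apply/andP.
Qed.

Lemma fl_shift_down (R : realType) N K (t : R) : 0 <= t -> (N <= K)%N ->
  (1 <= fl N t)%N ->
  fl K (t - 1 / 2 ^+ N) = (fl K t - 2 ^ (K - N))%N.
Proof.
move=> t0 NK H1.
have e : t = (t - 1 / 2 ^+ N) + 1 / 2 ^+ N by rewrite subrK.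
have t1 : 0 <= t - 1 / 2 ^+ N.
  have := fl_itv N t0 => /andP[A _].
  rewrite subr_ge0 ler_pdivrMr ?expr2_gt0 //; apply: le_trans A.
  by rewrite ler1n.
have := fl_shift_up t1 NK; rewrite -e => ->; lia.
Qed.


Lemma fl_divK (R : realType) N K (t : R) : 0 <= t -> (N <= K)%N ->
  fl N t = (fl K t %/ 2 ^ (K - N))%N.
Proof. by move=> t0 NK; rewrite (fl_div N (K - N) t0) subnKC. Qed.

Lemma sub_dyadic (R : realType) K j N c : (0 < j)%N -> (0 < c)%N ->
  `[< (@dyadic R K j `<=` @dyadic R N c)%classic >] =
  (N <= K)%N && ((j - 1) %/ 2 ^ (K - N) == c - 1)%N.
Proof.
move=> j0 c0; apply/asboolP/idP.
- move=> H.
  have key : forall w : nat, (w %/ 2 ^ (N - K) = j - 1)%N -> (K < N)%N ->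
      w = (c - 1)%N.
    move=> w Hw KN.
    have t0 : (0:R) <= w%:R / 2 ^+ N by apply: divr_ge0 => //; exact: ltW (expr2_gt0 _ _).
    have : dyadic N c (w%:R / 2 ^+ N :> R).
      apply: H; apply/(memD _ _ t0); apply/andP; split => //.
      rewrite (fl_divK t0 (ltnW KN)) fl_nat Hw; apply/eqP; lia.
    by move/(memD _ _ t0) => /andP[_ /eqP]; rewrite fl_nat => ->; lia.
  case: (leqP N K) => NK /=.
  + set w := (j - 1)%N.
    have t0 : (0:R) <= w%:R / 2 ^+ K by apply: divr_ge0 => //; exact: ltW (expr2_gt0 _ _).
    have : dyadic N c (w%:R / 2 ^+ K :> R).
      by apply: H; apply/(memD _ _ t0); rewrite fl_nat j0 /w; apply/eqP; lia.
    by move/(memD _ _ t0) => /andP[_ /eqP]; rewrite (fl_divK t0 NK) fl_nat => ->; lia.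
  + set q := (2 ^ (N - K))%N.
    have q2 : (2 <= q)%N.
      rewrite /q; have -> : (N - K = (N - K - 1).+1)%N by lia.
      by rewrite expnS leq_pmulr // expn_gt0.
    have e1 := key ((j - 1) * q)%N; have e2 := key ((j - 1) * q + (q - 1))%N.
    rewrite mulnK ?expn_gt0 // in e1.
    have : (((j - 1) * q + (q - 1)) %/ q = j - 1)%N.
      by rewrite divnMDl ?(ltnW q2) // divn_small ?addn0 //; lia.
    move=> /e2 => e2'.
    have := e1 erefl NK; have := e2' NK; lia.
- move=> /andP[NK /eqP Hd] t Ht.
  have t0 := dyadic_ge0 Ht.
  move/(memD _ _ t0): Ht => /andP[_ /eqP Ht].
  apply/(memD _ _ t0); rewrite c0 (fl_divK t0 NK) Ht /=; apply/eqP; lia.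
Qed.


Definition sig (i z : nat) : nat :=
  if z == (4 * i - 3)%N then (4 * i - 2)%N
  else if z == (4 * i - 2)%N then (4 * i - 3)%N else z.

Definition tau (h i K x : nat) : nat :=
  if (h.+1 <= K)%N then (sig i (x %/ 2 ^ (K - h.+1)) * 2 ^ (K - h.+1) + x %% 2 ^ (K - h.+1))%N
  else x.

Definition phi (R : realType) (h i : nat) (t : R) : R :=
  if fl h.+1 t == (4 * i - 3)%N then t + 1 / 2 ^+ h.+1
  else if fl h.+1 t == (4 * i - 2)%N then t - 1 / 2 ^+ h.+1 else t.

Lemma jstarE (R : realType) h i k j : (0 < i)%N -> (0 < j)%N ->
  jstar R h i (k, j) = (k, (tau h i (k - 1) (j - 1)).+1).
Proof.
move=> i0 j0; rewrite /jstar /= !sub_dyadic //; try lia.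
rewrite /tau /sig addn1.
case: (leqP h.+1 (k - 1)) => NK /=; last by congr pair; lia.
have -> : (k - h - 2 = k - 1 - h.+1)%N by lia.
set q := (2 ^ (k - 1 - h.+1))%N.
have q0 : (0 < q)%N by rewrite expn_gt0.
have Hd := divn_eq (j - 1) q.
have -> : (4 * i - 2 - 1 = 4 * i - 3)%N by lia.
have -> : (4 * i - 1 - 1 = 4 * i - 2)%N by lia.
case: eqP => [E|E].
  congr pair; rewrite E in Hd; nia.
case: eqP => [E'|E'].
  congr pair; rewrite E' in Hd; nia.
congr pair; lia.
Qed.


Lemma phi_ge0 (R : realType) h i (t : R) : (0 < i)%N -> 0 <= t -> 0 <= phi h i t.
Proof.
move=> i0 t0; rewrite /phi; case: eqP => E.
  apply: addr_ge0 => //; apply: divr_ge0 => //; exact: ltW (expr2_gt0 _ _).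
case: eqP => E' //.
have := fl_itv h.+1 t0 => /andP[A _].
rewrite subr_ge0 ler_pdivrMr ?expr2_gt0 //; apply: le_trans A.
by rewrite E' ler1n; lia.
Qed.

Lemma fl_phi_ge (R : realType) h i K (t : R) : (0 < i)%N -> 0 <= t -> (h.+1 <= K)%N ->
  fl K (phi h i t) = tau h i K (fl K t).
Proof.
move=> i0 t0 NK; rewrite /phi /tau NK /sig -(fl_divK t0 NK).
set q := (2 ^ (K - h.+1))%N.
have q0 : (0 < q)%N by rewrite expn_gt0.
have Hd := divn_eq (fl K t) q.
rewrite -/q -(fl_divK t0 NK) in Hd.
case: eqP => [E|E].
  rewrite fl_shift_up // -/q; rewrite E in Hd; nia.
case: eqP => [E'|E'].
  rewrite fl_shift_down // -/q; [rewrite E' in Hd; nia | lia].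
lia.
Qed.

Lemma fl_phi_N (R : realType) h i (t : R) : (0 < i)%N -> 0 <= t ->
  fl h.+1 (phi h i t) = sig i (fl h.+1 t).
Proof.
move=> i0 t0; rewrite fl_phi_ge // /tau leqnn subnn expn0 divn1 modn1; lia.
Qed.

Lemma fl_phi_lt (R : realType) h i K (t : R) : (0 < i)%N -> 0 <= t -> (K <= h.+1)%N ->
  fl K (phi h i t) = (sig i (fl h.+1 t) %/ 2 ^ (h.+1 - K))%N.
Proof.
move=> i0 t0 KN; rewrite (fl_divK (phi_ge0 h i0 t0) KN) fl_phi_N //.
Qed.

Lemma fl_lt1 (R : realType) N (s : R) : 0 <= s -> (s < 1) = (fl N s < 2 ^ N)%N.
Proof.
move=> s0; rewrite /fl truncn_lt_nat ?natrX.
  by rewrite -{2}(mul1r (2 ^+ N)) ltr_pM2r ?expr2_gt0.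
apply: mulr_ge0 => //; exact: ltW (expr2_gt0 _ _).
Qed.

Lemma phi_lt1 (R : realType) h i (t : R) : (0 < i)%N -> (i <= 2 ^ (h - 1))%N -> (0 < h)%N ->
  0 <= t -> t < 1 -> phi h i t < 1.
Proof.
move=> i0 ih h0 t0 t1.
rewrite (fl_lt1 h.+1 (phi_ge0 h i0 t0)) fl_phi_N //.
rewrite (fl_lt1 h.+1 t0) in t1.
have e : (2 ^ h.+1 = 4 * 2 ^ (h - 1))%N.
  by case: (h) h0 => // h' _; rewrite subn1 /= !expnS mulnA.
rewrite /sig; case: eqP => E; [lia|case: eqP => E'; lia].
Qed.

Lemma phiK (R : realType) h i (t : R) : (0 < i)%N -> 0 <= t -> phi h i (phi h i t) = t.
Proof.
move=> i0 t0; rewrite {1}/phi fl_phi_N //.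
rewrite /sig /phi; set z := fl h.+1 t.
have [E|E] := eqVneq z (4 * i - 3)%N.
  rewrite ifF; last by apply/eqP; lia.
  by rewrite eqxx addrK.
have [E'|E'] := eqVneq z (4 * i - 2)%N.
  by rewrite eqxx subrK.
by rewrite (negbTE E) (negbTE E').
Qed.


Definition brb (R : realType) (t : R) (p : nat * nat) : bool :=
  [&& (0 < p.1)%N, (0 < p.2)%N & fl (p.1 - 1) t == (p.2 - 1)%N].

Lemma brE (R : realType) (t : R) p : 0 <= t -> t < 1 -> `[< branch t p >] = brb t p.
Proof.
move=> t0 t1; case: p => k j; rewrite /branch /=; apply/asboolP/idP.
- case => /andP[k0 /andP[j0 _]] /(memD _ _ t0) /andP[_ E] /=.
  by move: E; rewrite /brb /= k0 j0 !subn1.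
- case/and3P=> /= k0 j0 /eqP E; split.
    rewrite /inD /= k0 j0 /=.
    have := t1; rewrite (fl_lt1 (k - 1) t0) E; lia.
  by apply/(memD _ _ t0); rewrite j0 E subn1 /=.
Qed.

Lemma sig_inj i : (0 < i)%N -> injective (sig i).
Proof.
move=> i0 x y; rewrite /sig.
case: (x =P (4*i-3)%N); case: (x =P (4*i-2)%N); case: (y =P (4*i-3)%N);
  case: (y =P (4*i-2)%N); lia.
Qed.

Lemma sig_div4 i z : (0 < i)%N -> (sig i z %/ 4 = z %/ 4)%N.
Proof.
move=> i0; rewrite /sig; case: (z =P (4*i-3)%N); case: (z =P (4*i-2)%N); lia.
Qed.

Lemma tau_inj h i K : (0 < i)%N -> injective (tau h i K).
Proof.
move=> i0 x y; rewrite /tau; case: ifP => // _.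
set q := (2 ^ (K - h.+1))%N.
have q0 : (0 < q)%N by rewrite expn_gt0.
move=> E.
have E1 := f_equal (fun n => n %/ q)%N E.
have E2 := f_equal (fun n => n %% q)%N E.
have hx : (x %% q %/ q = 0)%N by rewrite divn_small // ltn_mod.
have hy : (y %% q %/ q = 0)%N by rewrite divn_small // ltn_mod.
rewrite /= !divnMDl // hx hy !addn0 in E1.
rewrite /= !modnMDl !modn_mod in E2.
by rewrite (divn_eq x q) (divn_eq y q) E2 (sig_inj i0 E1).
Qed.

Lemma key (R : realType) h i k j (t : R) : (0 < i)%N -> 0 <= t -> (0 < j)%N ->
  (k, j) != (h.+1, (2 * i - 1)%N) -> (k, j) != (h.+1, (2 * i)%N) ->
  brb (phi h i t) (jstar R h i (k, j)) = brb t (k, j).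
Proof.
move=> i0 t0 j0 n1 n2; rewrite jstarE // /brb /= j0 subn1 /=.
case: (k) n1 n2 => // k' n1 n2 /=.
rewrite subn1 /=.
case: (leqP h.+1 k') => NK.
  rewrite fl_phi_ge //; apply/eqP/eqP => [|->] //; exact: tau_inj.
have -> : tau h i k' (j - 1) = (j - 1)%N by rewrite /tau leqNgt NK.
rewrite fl_phi_lt ?(ltnW NK) // (fl_divK t0 (ltnW NK)).
set z := fl h.+1 t.
case: (ltngtP k' h) => Kh; last first.
- rewrite Kh subSnn expn1.
  move: n1 n2; rewrite Kh !xpair_eqE eqxx /= => /eqP n1 /eqP n2.
  rewrite /sig; case: (z =P (4*i-3)%N); case: (z =P (4*i-2)%N);
  case: (j =P (2*i-1)%N); case: (j =P (2*i)%N); try lia.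
- lia.
- have -> : (2 ^ (h.+1 - k') = 4 * 2 ^ (h.+1 - k' - 2))%N.
    by rewrite -(expnD 2 2); congr expn; lia.
  by rewrite !divnMA sig_div4.
Qed.

Local Close Scope ring_scope.
Local Open Scope fset_scope.

Lemma jstar_inj (R : realType) h i p p' : (0 < i)%N -> inD p -> inD p' ->
  jstar R h i p = jstar R h i p' -> p = p'.
Proof.
case: p => k j; case: p' => k' j' i0 /and3P[_ j0 _] /and3P[_ j0' _].
rewrite !jstarE // => -[<- E]; congr pair.
have := tau_inj i0 E; move: j0 j0' => /= j0 j0'; lia.
Qed.

Lemma jstar_child (R : realType) h i p c : (0 < i)%N -> inD p ->
  jstar R h i p = (h.+1, c) -> p = (h.+1, c).
Proof.
case: p => k j i0 /and3P[_ /= j0 _]; rewrite jstarE // => -[E <-].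
rewrite /tau E subn1 /= ltnn; congr pair; lia.
Qed.

Lemma card_part (R : realType) (F : {fset nat * nat}) (h i : nat) :
  (forall p, p \in F -> inD p) ->
  admissible F h i ->
  #|` Phi R h i F | = (#|` F |).+1.
Proof.
move=> HD /and3P[hiF c1F c2F].
have /and3P[/= h0 i0 _] := HD _ hiF.
set G := F `\` fork h i.
have HG : forall p, p \in G -> (p \in F) && (p \notin fork h i).
  by move=> p; rewrite !inE andbC.
have cG : #|` G| = (#|` F|).-1.
  rewrite /G cardfsD.
  have -> : F `&` fork h i = [fset (h, i)].
    apply/fsetP => x; rewrite !inE.
    case: (x =P (h, i)) => [->|nx]; first by rewrite hiF.
    case: (x =P (h.+1, (2 * i - 1)%N)) => [->|_]; first by rewrite (negbTE c1F).
    case: (x =P (h.+1, (2 * i)%N)) => [->|_]; first by rewrite (negbTE c2F).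
    by rewrite andbF.
  by rewrite cardfs1 subn1.
have cI : #|` [fset jstar R h i p | p in G]| = #|` G|.
  apply/eqP/card_in_imfsetP => p p' /HG/andP[/HD pD _] /HG/andP[/HD pD' _].
  exact: jstar_inj.
rewrite /Phi cardfsU cI cG cardfs2.
have -> : [fset (h.+1, (2 * i - 1)%N); (h.+1, (2 * i)%N)] `&` [fset jstar R h i p | p in G] = fset0.
  apply/fsetP => x; rewrite !inE.
  apply/negbTE; apply/negP => /andP[Hx /imfsetP[p /HG/andP[pF pnf] E]].
  move: Hx pnf; rewrite /fork !inE => /orP[/eqP Hx|/eqP Hx];
    rewrite Hx in E; have := jstar_child i0 (HD _ pF) (esym E) => ->;
    by rewrite eqxx !orbT.
have : (0 < #|` F|)%N by rewrite cardfs_gt0; apply/fset0Pn; exists (h, i).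
have -> : (h.+1, (2 * i - 1)%N) != (h.+1, (2 * i)%N) by rewrite xpair_eqE eqxx /=; apply/eqP; lia.
rewrite cardfs0 /=; lia.
Qed.


Lemma bc_brb (R : realType) (X : {fset nat * nat}) (t : R) : (0 <= t)%R -> (t < 1)%R ->
  branch_count X t = #|` [fset p in X | brb t p]|.
Proof.
move=> t0 t1; rewrite /branch_count; congr (#|` _|); apply/fsetP => x.
by rewrite !inE brE.
Qed.

Lemma count_part (R : realType) (F : {fset nat * nat}) (h i : nat) (t : R) :
  (forall p, p \in F -> inD p) ->
  admissible F h i -> (0 <= t)%R -> (t < 1)%R ->
  branch_count (Phi R h i F) (phi h i t) = branch_count F t.
Proof.
move=> HD /and3P[hiF c1F c2F] t0 t1.
have /and3P[/= h0 i0 ih] := HD _ hiF.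
have pt0 := phi_ge0 h i0 t0.
have pt1 := phi_lt1 i0 ih h0 t0 t1.
rewrite !bc_brb //.
set z := fl h.+1 t.
pose psi p := if p == (h, i) then (h.+1, (sig i z %/ 2).+1) else jstar R h i p.
have brhi : brb t (h, i) = (z %/ 4 == i - 1)%N.
  rewrite /brb /= h0 i0 /= (fl_divK t0 (_ : h - 1 <= h.+1)%N); last lia.
  by have -> : (h.+1 - (h - 1) = 2)%N by lia.
have brc : forall c, brb (phi h i t) (h.+1, c) = (0 < c)%N && (sig i z %/ 2 == c - 1)%N.
  move=> c; rewrite /brb /= subn1 /= fl_phi_lt ?leqnSn //.
  by rewrite subSnn expn1.
have notchild : forall p, p \in F -> p != (h.+1, (2 * i - 1)%N) /\ p != (h.+1, (2 * i)%N).
  by move=> p pF; split; apply/eqP => E; [move: c1F|move: c2F]; rewrite -E pF.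
have sd4 := sig_div4 z i0.
have chm : (z %/ 4 = i - 1)%N ->
    ((sig i z %/ 2).+1 = 2 * i - 1)%N \/ ((sig i z %/ 2).+1 = 2 * i)%N.
  move=> E; move: sd4; rewrite E; lia.
have nchild : forall p, p \in F -> brb t (h, i) -> jstar R h i p != (h.+1, (sig i z %/ 2).+1).
  move=> p pF; rewrite brhi => /eqP /chm Hm; apply/eqP => E.
  have E' := jstar_child i0 (HD _ pF) E.
  by have [] := notchild _ pF; rewrite E'; case: Hm => ->; rewrite eqxx.
have cardeq : #|` psi @` [fset p in F | brb t p]| = #|` [fset p in F | brb t p]|.
  apply/eqP/card_in_imfsetP => p p'; rewrite !inE => /andP[pF pb] /andP[p'F p'b]; rewrite /psi.
  have [Ep|nh] := eqVneq p (h, i); have [Ep'|nh'] := eqVneq p' (h, i) => //.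
  - by rewrite Ep Ep'.
  - by move=> E; have := nchild _ p'F; rewrite -E eqxx; rewrite Ep in pb => /(_ pb).
  - by move=> E; have := nchild _ pF; rewrite E eqxx; rewrite Ep' in p'b => /(_ p'b).
  - by move=> E; exact: (jstar_inj i0 (HD _ pF) (HD _ p'F) E).
have keyF : forall p, p \in F -> brb (phi h i t) (jstar R h i p) = brb t p.
  move=> [k j] pF; have [n1 n2] := notchild _ pF; have /and3P[_ /= j0 _] := HD _ pF.
  exact: key.
rewrite -cardeq; congr (#|` _|); apply/fsetP => x.
apply/idP/idP.
- rewrite inE => /andP[]; rewrite /Phi in_fsetU in_fset2.
  move=> /orP[/orP[]/eqP->|/imfsetP[p pG ->]] xb.
  + apply/imfsetP; exists (h, i).
      change ((h,i) \in [fset p in F | brb t p]); rewrite !inE.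
      apply/andP; split; first exact: hiF.
      rewrite brhi; move: xb; rewrite brc; lia.
    by rewrite /psi eqxx; move: xb; rewrite brc => xb; congr pair; lia.
  + apply/imfsetP; exists (h, i).
      change ((h,i) \in [fset p in F | brb t p]); rewrite !inE.
      apply/andP; split; first exact: hiF.
      rewrite brhi; move: xb; rewrite brc; lia.
    by rewrite /psi eqxx; move: xb; rewrite brc => xb; congr pair; lia.
  + move: pG; rewrite in_fsetD => /andP[pnf pF].
    apply/imfsetP; exists p => //.
    change (p \in [fset p in F | brb t p]); rewrite !inE.
    by apply/andP; split; [exact: pF | rewrite -keyF].
    rewrite /psi ifF //; apply/negbTE; apply: contra pnf => /eqP ->.
    by rewrite /fork !inE eqxx.
- move=> /imfsetP[p]; rewrite inE => /andP[pF pb] ->.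
  change (psi p \in [fset q in Phi R h i F | brb (phi h i t) q]); rewrite !inE.
  have [H1 H2] : psi p \in Phi R h i F /\ brb (phi h i t) (psi p).
    rewrite /psi; have [Ep|nh] := eqVneq p (h, i).
      rewrite Ep brhi in pb.
      rewrite brc /Phi in_fsetU in_fset2 /=; split; last by apply/eqP; lia.
      by have [->|->] := chm (eqP pb); rewrite eqxx ?orbT.
    rewrite keyF // pb; split => //; rewrite /Phi in_fsetU; apply/orP; right.
    apply/imfsetP; exists p => //; rewrite in_fsetD /fork !inE.
    apply/andP; split; last exact: pF.
    by have [n1 n2] := notchild _ pF; rewrite (negbTE nh) (negbTE n1) (negbTE n2).
  by move: H1 H2; rewrite /Phi !inE => -> ->.
Qed.


Lemma max_eq a b (P Q : nat -> bool) : (forall m, P m = Q m) ->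
  (forall m, P m -> m < a) -> (forall m, Q m -> m < b) ->
  \max_(m < a | P m) (m : nat) = \max_(m < b | Q m) (m : nat).
Proof.
move=> PQ Pa Qb.
rewrite (big_ord_widen_cond (a + b) P (fun m => m) (leq_addr b a)).
rewrite (big_ord_widen_cond (a + b) Q (fun m => m) (leq_addl a b)).
apply: eq_bigl => m; rewrite -PQ.
case E: (P m) => //=; have E' : Q m by rewrite -PQ.
by rewrite (Pa _ E) (Qb _ E').
Qed.

Lemma bc_le (R : realType) X (t : R) : branch_count X t <= #|` X|.
Proof.
rewrite /branch_count; apply: fsubset_leq_card; apply/fsubsetP => x.
by rewrite !inE => /andP[].
Qed.

Theorem lemma3p6 (R : realType) (F : {fset nat * nat}) (h i : nat) :
  (forall p, p \in F -> inD p) ->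
  admissible F h i ->
  #|` Phi R h i F | = (#|` F |).+1 /\ lh R (Phi R h i F) = lh R F.
Proof.
move=> HD Had; split; first exact: card_part.
have /and3P[hiF _ _] := Had.
have /and3P[/= h0 i0 ih] := HD _ hiF.
rewrite /lh.
apply: (@max_eq _ _
  (fun m => `[< exists t : R, (0 <= t < 1)%R /\ branch_count (Phi R h i F) t = m >])
  (fun m => `[< exists t : R, (0 <= t < 1)%R /\ branch_count F t = m >])).
- move=> m; apply/idP/idP => /asboolP [t [/andP[t0 t1] E]]; apply/asboolP.
  + exists (phi h i t); split; first by rewrite phi_ge0 ?phi_lt1.
    by rewrite -(count_part HD Had (phi_ge0 h i0 t0) (phi_lt1 i0 ih h0 t0 t1)) phiK.
  + exists (phi h i t); split; first by rewrite phi_ge0 ?phi_lt1.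
    by rewrite (count_part HD Had t0 t1).
- by move=> m /asboolP [t [_ <-]]; rewrite ltnS bc_le.
- by move=> m /asboolP [t [_ <-]]; rewrite ltnS bc_le.
Qed.
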